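(* Let $A$ be a closed symmetric relation in $\mathfrak H$, let $\{\mathcal H,\Gamma_0,\Gamma_1\}$ be an AB-generalized boundary triple for $A^*$ with $A_0=\ker\Gamma_0$, Weyl function $M(\cdot)$ and $\gamma$-field $\gamma(\cdot)$. Let $A_\Theta$ be a linear relation with $A\subset A_\Theta\subset\operatorname{dom}\Gamma$ and put $\Theta=\Gamma(A_\Theta)=\{\{\Gamma_0\hat f,\Gamma_1\hat f\}:\hat f\in A_\Theta\}$. Then for every $\lambda\in\rho(A_0)$ $(A_\Theta-\lambda)^{-1}=(A_0-\lambda)^{-1}+\gamma(\lambda)(\Theta-M(\lambda))^{-1}\gamma(\bar\lambda)^*$, where all inverses, sums and products are understood in the sense of linear relations (in particular $A_\Theta$ need not be closed and $\lambda$ need not belong to $\rho(A_\Theta)$).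
   Context: Linear relations: subspaces of product spaces; inverse $T^{-1}=\{\{g,f\}:\{f,g\}\in T\}$; sum $T_1+T_2=\{\{f,g+k\}:\{f,g\}\in T_1,\{f,k\}\in T_2\}$; product $ST=\{\{f,h\}:\exists g,\{f,g\}\in T,\{g,h\}\in S\}$. An AB-generalized boundary triple for $A^*$ is a single-valued linear operator $\Gamma=\{\Gamma_0,\Gamma_1\}:\mathfrak H^2\supset\operatorname{dom}\Gamma\to\mathcal H^2$ with $\operatorname{dom}\Gamma\subset A^*$ dense in $A^*$, satisfying Green's identity $(f',g)-(f,g')=(\Gamma_1\hat f,\Gamma_0\hat g)-(\Gamma_0\hat f,\Gamma_1\hat g)$ for $\hat f=\{f,f'\},\hat g=\{g,g'\}\in\operatorname{dom}\Gamma$, with $\operatorname{ran}\Gamma_0$ dense in $\mathcal H$ and $A_0=\ker\Gamma_0$ selfadjoint. Weyl function and $\gamma$-field: $M(\lambda)\Gamma_0\hat f_\lambda=\Gamma_1\hat f_\lambda$, $\gamma(\lambda)\Gamma_0\hat f_\lambda=f_\lambda$ for $\hat f_\lambda=\{f_\lambda,\lambda f_\lambda\}\in\operatorname{dom}\Gamma$; $\gamma(\bar\lambda)^*$ is the Hilbert space adjoint (a bounded everywhere defined operator $\mathfrak H\to\mathcal H$). *)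

(* Defs.v *)
From Stdlib Require Import Reals.
Open Scope R_scope.

Record Cx := Cmk { Re : R ; Im : R }.
Definition C0 : Cx := Cmk 0 0.
Definition C1 : Cx := Cmk 1 0.
Definition Cadd (a b : Cx) : Cx := Cmk (Re a + Re b) (Im a + Im b).
Definition Copp (a : Cx) : Cx := Cmk (- Re a) (- Im a).
Definition Csub (a b : Cx) : Cx := Cadd a (Copp b).
Definition Cmul (a b : Cx) : Cx :=
  Cmk (Re a * Re b - Im a * Im b) (Re a * Im b + Im a * Re b).
Definition Cconj (a : Cx) : Cx := Cmk (Re a) (- Im a).

(* inner product linear in the first argument, conjugate-linear in the second *)
Record HilbertSpace := {
  carrier :> Type;
  vzero : carrier;
  vadd : carrier -> carrier -> carrier;
  vopp : carrier -> carrier;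
  vscal : Cx -> carrier -> carrier;
  inner : carrier -> carrier -> Cx;
  vadd_assoc : forall x y z, vadd x (vadd y z) = vadd (vadd x y) z;
  vadd_comm : forall x y, vadd x y = vadd y x;
  vadd_0 : forall x, vadd x vzero = x;
  vadd_opp : forall x, vadd x (vopp x) = vzero;
  vscal_1 : forall x, vscal C1 x = x;
  vscal_assoc : forall a b x, vscal a (vscal b x) = vscal (Cmul a b) x;
  vscal_distr_v : forall a x y, vscal a (vadd x y) = vadd (vscal a x) (vscal a y);
  vscal_distr_s : forall a b x, vscal (Cadd a b) x = vadd (vscal a x) (vscal b x);
  inner_add_l : forall x y z, inner (vadd x y) z = Cadd (inner x z) (inner y z);
  inner_scal_l : forall a x y, inner (vscal a x) y = Cmul a (inner x y);
  inner_conj : forall x y, inner y x = Cconj (inner x y);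
  inner_pos : forall x, 0 <= Re (inner x x);
  inner_def : forall x, Re (inner x x) = 0 -> x = vzero;
  complete : forall u : nat -> carrier,
    (forall eps, 0 < eps -> exists N, forall m n, (N <= m)%nat -> (N <= n)%nat ->
        sqrt (Re (inner (vadd (u m) (vopp (u n))) (vadd (u m) (vopp (u n))))) < eps) ->
    exists l, forall eps, 0 < eps -> exists N, forall n, (N <= n)%nat ->
        sqrt (Re (inner (vadd (u n) (vopp l)) (vadd (u n) (vopp l)))) < eps
}.

Arguments vzero {h}.
Arguments vadd {h} _ _.
Arguments vopp {h} _.
Arguments vscal {h} _ _.
Arguments inner {h} _ _.

Definition vsub {H : HilbertSpace} (x y : H) : H := vadd x (vopp y).
Definition hnorm {H : HilbertSpace} (x : H) : R := sqrt (Re (inner x x)).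

Definition rel (X Y : HilbertSpace) := X -> Y -> Prop.

Definition rel_eq {X Y : HilbertSpace} (S T : rel X Y) : Prop :=
  forall f g, S f g <-> T f g.

Definition linear_rel {X Y : HilbertSpace} (T : rel X Y) : Prop :=
  T vzero vzero /\
  (forall f g f' g', T f g -> T f' g' -> T (vadd f f') (vadd g g')) /\
  (forall a f g, T f g -> T (vscal a f) (vscal a g)).

Definition closed_rel {X Y : HilbertSpace} (T : rel X Y) : Prop :=
  forall (u : nat -> X) (v : nat -> Y) (f : X) (g : Y),
    (forall n, T (u n) (v n)) ->
    (forall eps, 0 < eps -> exists N, forall n, (N <= n)%nat ->
        hnorm (vsub (u n) f) < eps /\ hnorm (vsub (v n) g) < eps) ->
    T f g.

Definition adj {X Y : HilbertSpace} (T : rel X Y) : rel Y X :=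
  fun h k => forall f f', T f f' -> inner f' h = inner f k.

Definition symmetric_rel {X : HilbertSpace} (T : rel X X) : Prop :=
  forall f f' g g', T f f' -> T g g' -> inner f' g = inner f g'.

Definition selfadjoint_rel {X : HilbertSpace} (T : rel X X) : Prop :=
  rel_eq T (adj T).

Definition rinv {X Y : HilbertSpace} (T : rel X Y) : rel Y X :=
  fun g f => T f g.

Definition rsum {X Y : HilbertSpace} (T1 T2 : rel X Y) : rel X Y :=
  fun f h => exists g k, T1 f g /\ T2 f k /\ h = vadd g k.

Definition rsub {X Y : HilbertSpace} (T1 T2 : rel X Y) : rel X Y :=
  fun f h => exists g k, T1 f g /\ T2 f k /\ h = vsub g k.

Definition rprod {X Y Z : HilbertSpace} (S : rel Y Z) (T : rel X Y) : rel X Z :=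
  fun f h => exists g, T f g /\ S g h.

Definition rshift {X : HilbertSpace} (T : rel X X) (lam : Cx) : rel X X :=
  fun f h => exists g, T f g /\ h = vsub g (vscal lam f).

Definition resolvent_set {X : HilbertSpace} (T : rel X X) (lam : Cx) : Prop :=
  let Rl := rinv (rshift T lam) in
  (forall h, exists f, Rl h f) /\
  (forall h f1 f2, Rl h f1 -> Rl h f2 -> f1 = f2) /\
  (exists c, forall h f, Rl h f -> hnorm f <= c * hnorm h).

(* Gamma = {Gamma0, Gamma1} with domain D (a set of pairs {f,f'} in Hf^2);
   values of G0, G1 outside D are irrelevant. *)
Definition A0_of {Hf Hc : HilbertSpace} (D : rel Hf Hf) (G0 : Hf -> Hf -> Hc) : rel Hf Hf :=
  fun f f' => D f f' /\ G0 f f' = vzero.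

Definition AB_generalized_boundary_triple {Hf Hc : HilbertSpace}
  (A : rel Hf Hf) (D : rel Hf Hf) (G0 G1 : Hf -> Hf -> Hc) : Prop :=
  linear_rel D /\
  (forall f f', D f f' -> adj A f f') /\
  (forall f f', adj A f f' -> forall eps, 0 < eps ->
     exists g g', D g g' /\ hnorm (vsub f g) < eps /\ hnorm (vsub f' g') < eps) /\
  (forall f f' g g', D f f' -> D g g' ->
     G0 (vadd f g) (vadd f' g') = vadd (G0 f f') (G0 g g') /\
     G1 (vadd f g) (vadd f' g') = vadd (G1 f f') (G1 g g')) /\
  (forall a f f', D f f' ->
     G0 (vscal a f) (vscal a f') = vscal a (G0 f f') /\
     G1 (vscal a f) (vscal a f') = vscal a (G1 f f')) /\
  (forall f f' g g', D f f' -> D g g' ->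
     Csub (inner f' g) (inner f g') =
     Csub (inner (G1 f f') (G0 g g')) (inner (G0 f f') (G1 g g'))) /\
  (forall h eps, 0 < eps -> exists f f', D f f' /\ hnorm (vsub h (G0 f f')) < eps) /\
  selfadjoint_rel (A0_of D G0).

(* Weyl function (as its graph): M(lambda) Gamma0 f_lambda = Gamma1 f_lambda *)
Definition weyl {Hf Hc : HilbertSpace} (D : rel Hf Hf) (G0 G1 : Hf -> Hf -> Hc)
  (lam : Cx) : rel Hc Hc :=
  fun h k => exists f, D f (vscal lam f) /\ h = G0 f (vscal lam f) /\ k = G1 f (vscal lam f).

(* gamma-field (as its graph): gamma(lambda) Gamma0 f_lambda = f_lambda *)
Definition gamma_field {Hf Hc : HilbertSpace} (D : rel Hf Hf) (G0 : Hf -> Hf -> Hc)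
  (lam : Cx) : rel Hc Hf :=
  fun h g => exists f, D f (vscal lam f) /\ h = G0 f (vscal lam f) /\ g = f.

Definition Gamma_image {Hf Hc : HilbertSpace} (G0 G1 : Hf -> Hf -> Hc)
  (AT : rel Hf Hf) : rel Hc Hc :=
  fun h k => exists f f', AT f f' /\ h = G0 f f' /\ k = G1 f f'.

(* Main.v *)
Require Import Defs.
From Stdlib Require Import Reals.
From Stdlib Require Import Lra Lia Psatz Classical IndefiniteDescription.
Require Import Defs.
Open Scope R_scope.


Lemma Cx_ext (a b : Cx) : Re a = Re b -> Im a = Im b -> a = b.
Proof. destruct a, b; simpl; intros; subst; reflexivity. Qed.

Ltac cx := apply Cx_ext; simpl.

Lemma vscal0 {H : HilbertSpace} (x : H) : vscal C0 x = vzero.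
Proof.
  assert (E : vscal C0 x = vadd (vscal C0 x) (vscal C0 x)).
  { rewrite <- vscal_distr_s. f_equal. unfold C0, Cadd; simpl. f_equal; ring. }
  assert (E2 : vadd (vscal C0 x) (vopp (vscal C0 x)) = vadd (vadd (vscal C0 x) (vscal C0 x)) (vopp (vscal C0 x))) by (rewrite <- E; reflexivity).
  rewrite vadd_opp, <- vadd_assoc, vadd_opp, vadd_0 in E2. auto.
Qed.

Definition m1 : Cx := Cmk (-1) 0.

Lemma vopp_scal {H : HilbertSpace} (x : H) : vopp x = vscal m1 x.
Proof.
  assert (E : vadd x (vscal m1 x) = vzero).
  { rewrite <- (vscal_1 _ x) at 1. rewrite <- vscal_distr_s.
    replace (Cadd C1 m1) with C0 by (cx; ring). apply vscal0. }
  rewrite <- (vadd_0 _ (vopp x)). rewrite <- E.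
  rewrite vadd_assoc, (vadd_comm _ (vopp x) x), vadd_opp.
  rewrite vadd_comm, vadd_0. reflexivity.
Qed.

Lemma inner_0_l {H : HilbertSpace} (y : H) : inner vzero y = C0.
Proof.
  rewrite <- (vscal0 vzero). rewrite inner_scal_l. cx; ring.
Qed.

Lemma inner_add_r {H : HilbertSpace} (x y z : H) : inner x (vadd y z) = Cadd (inner x y) (inner x z).
Proof.
  rewrite inner_conj, inner_add_l, (inner_conj _ y x), (inner_conj _ z x).
  destruct (inner x y), (inner x z); cx; ring.
Qed.

Lemma inner_scal_r {H : HilbertSpace} a (x y : H) : inner x (vscal a y) = Cmul (Cconj a) (inner x y).
Proof.
  rewrite inner_conj, inner_scal_l, (inner_conj _ y x).
  destruct (inner x y), a; cx; ring.
Qed.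

Lemma inner_0_r {H : HilbertSpace} (y : H) : inner y vzero = C0.
Proof. rewrite inner_conj, inner_0_l. cx; ring. Qed.

Definition nsq {H : HilbertSpace} (x : H) := Re (inner x x).

Lemma nsq_ge0 {H : HilbertSpace} (x : H) : 0 <= nsq x.
Proof. apply inner_pos. Qed.

Lemma inner_self_im {H : HilbertSpace} (x : H) : Im (inner x x) = 0.
Proof. pose proof (f_equal Im (inner_conj _ x x)). simpl in H0. lra. Qed.

Lemma inner_conj_re {H : HilbertSpace} (x y : H) : Re (inner y x) = Re (inner x y).
Proof. rewrite inner_conj. reflexivity. Qed.
Lemma inner_conj_im {H : HilbertSpace} (x y : H) : Im (inner y x) = - Im (inner x y).
Proof. rewrite inner_conj. reflexivity. Qed.

Lemma veq_nsq {H : HilbertSpace} (x y : H) : nsq (vadd x (vscal m1 y)) = 0 -> x = y.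
Proof.
  intro E. apply inner_def in E. rewrite <- vopp_scal in E.
  assert (x = vadd (vadd x (vopp y)) y).
  { rewrite <- vadd_assoc, (vadd_comm _ (vopp y)), vadd_opp, vadd_0. reflexivity. }
  rewrite H0, E, vadd_comm, vadd_0. reflexivity.
Qed.

Ltac expand :=
  unfold vsub, nsq; rewrite ?vopp_scal;
  repeat (rewrite ?inner_add_l, ?inner_add_r, ?inner_scal_l, ?inner_scal_r, ?inner_0_l, ?inner_0_r).
Ltac expand_in H :=
  unfold vsub, nsq in H; rewrite ?vopp_scal in H;
  repeat (rewrite ?inner_add_l, ?inner_add_r, ?inner_scal_l, ?inner_scal_r, ?inner_0_l, ?inner_0_r in H).

Ltac veq := apply veq_nsq; expand; simpl; ring.

Lemma test {H : HilbertSpace} (f g : H) : f = vadd g (vsub f g).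
Proof. veq. Qed.
Lemma test2 {H : HilbertSpace} (f g : H) l : vscal l (vadd f g) = vadd (vscal l g) (vscal l f).
Proof. veq. Qed.


Definition rs (t : R) : Cx := Cmk t 0.

Lemma nsq_scal {H : HilbertSpace} a (x : H) : nsq (vscal a x) = (Re a * Re a + Im a * Im a) * nsq x.
Proof. expand. pose proof (inner_self_im x). destruct a; simpl in *. nra. Qed.

Lemma nsq_add {H : HilbertSpace} (a b : H) : nsq (vadd a b) = nsq a + nsq b + 2 * Re (inner a b).
Proof. expand. simpl. rewrite (inner_conj_re a b). ring. Qed.

Lemma ineq2 {H : HilbertSpace} (a b : H) t : 0 < t -> 2 * Re (inner a b) <= t * nsq a + nsq b / t.
Proof.
  intro Ht. pose proof (nsq_ge0 (vsub (vscal (rs t) a) b)) as P.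
  expand_in P. unfold nsq. simpl in P. rewrite (inner_conj_re a b) in P.
  apply Rmult_le_reg_l with t; [lra|].
  field_simplify; [|lra]. nra.
Qed.

Lemma nsq_add_le {H : HilbertSpace} (a b : H) : nsq (vadd a b) <= 2 * nsq a + 2 * nsq b.
Proof. rewrite nsq_add. pose proof (ineq2 a b 1). lra. Qed.

Lemma nsq_neg {H : HilbertSpace} (a b : H) : nsq (vsub a b) = nsq (vsub b a).
Proof. expand. simpl. ring. Qed.

Lemma hn_lt {H : HilbertSpace} (x : H) e : 0 < e -> nsq x < e * e -> hnorm x < e.
Proof.
  intros He Hx. unfold hnorm. rewrite <- (sqrt_Rsqr e) by lra.
  apply sqrt_lt_1_alt. split; [apply nsq_ge0 | exact Hx].
Qed.

Lemma hn_lt_inv {H : HilbertSpace} (x : H) e : hnorm x < sqrt e -> nsq x < e.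
Proof. apply sqrt_lt_0_alt. Qed.

Lemma hn_sq {H : HilbertSpace} (x : H) : hnorm x * hnorm x = nsq x.
Proof. unfold hnorm. apply sqrt_sqrt. apply nsq_ge0. Qed.

Lemma arch e : 0 < e -> exists N, forall n, (N <= n)%nat -> / (INR n + 1) < e.
Proof.
  intro He. destruct (archimed_cor1 e He) as [N [HN HN0]]. exists N. intros n Hn.
  apply le_INR in Hn. apply lt_INR in HN0. simpl in HN0.
  apply Rle_lt_trans with (/ INR N); [|exact HN].
  apply Rinv_le_contravar; lra.
Qed.

Lemma zero_of_small r : 0 <= r -> (forall d, 0 < d -> r < d) -> r = 0.
Proof.
  intros H0 H. destruct (Req_dec r 0); auto. specialize (H r). lra.
Qed.

Lemma nsq0 {H : HilbertSpace} (x : H) : nsq x = 0 -> x = vzero.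
Proof. apply inner_def. Qed.

Lemma small_re {H : HilbertSpace} (w : H) d : 0 < d -> exists eta, 0 < eta /\
  forall x, nsq x < eta -> Re (inner x w) < d /\ - d < Re (inner x w).
Proof.
  intro Hd. set (t := (nsq w + 1) / d).
  assert (Ht : 0 < t) by (unfold t; pose proof (nsq_ge0 w); apply Rdiv_lt_0_compat; lra).
  exists (d / t). split; [apply Rdiv_lt_0_compat; lra|].
  intros x Hx.
  assert (Hw : nsq w / t < d).
  { unfold t. pose proof (nsq_ge0 w). apply Rmult_lt_reg_r with ((nsq w + 1)/ d).
    - apply Rdiv_lt_0_compat; lra.
    - field_simplify; lra. }
  assert (Hx' : t * nsq x < d).
  { apply Rmult_lt_compat_l with (r:=t) in Hx; [|lra].
    replace (t * (d/t)) with d in Hx by (field; lra). lra. }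
  pose proof (ineq2 x w t Ht).
  pose proof (ineq2 (vscal m1 x) w t Ht).
  rewrite nsq_scal, inner_scal_l in H1. simpl in H1.
  split; lra.
Qed.

Lemma im_as_re {H : HilbertSpace} (x w : H) : Im (inner x w) = Re (inner x (vscal (Cmk 0 1) w)).
Proof. rewrite inner_scal_r. simpl. ring. Qed.

Lemma parallel {H : HilbertSpace} (h u v : H) :
  nsq (vsub u v) = 2 * nsq (vsub h u) + 2 * nsq (vsub h v)
     - 4 * nsq (vsub h (vscal (rs (1/2)) (vadd u v))).
Proof. expand. simpl. field. Qed.

Lemma pyth {H : HilbertSpace} (w y : H) : Re (inner y w) = 0 -> nsq w <= nsq (vsub w y).
Proof. intro E. expand. simpl. rewrite (inner_conj_re y w). pose proof (nsq_ge0 y). unfold nsq in *. lra. Qed.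

Lemma vsub_back {H : HilbertSpace} (h a b : H) : h = vsub a b -> a = vadd h b.
Proof. intros ->. veq. Qed.

Lemma vsub_eq0 {H : HilbertSpace} (a b : H) : vsub a b = vzero -> a = b.
Proof. intro E. replace a with (vadd (vsub a b) b) by veq. rewrite E, vadd_comm, vadd_0. auto. Qed.


Definition seq_closed {H : HilbertSpace} (U : H -> Prop) :=
  forall (s : nat -> H) l, (forall n, U (s n)) ->
    (forall e, 0 < e -> exists N, forall n, (N <= n)%nat -> nsq (vsub (s n) l) < e) -> U l.

Lemma nsq_sub_split {H : HilbertSpace} (z u : H) s :
  nsq (vsub z (vscal (rs s) u)) = nsq z - 2 * s * Re (inner z u) + s * s * nsq u.
Proof. expand. simpl. rewrite (inner_conj_re z u). ring. Qed.

Lemma proj {H : HilbertSpace} (U : H -> Prop) :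
  U vzero -> (forall x y, U x -> U y -> U (vadd x y)) -> (forall a x, U x -> U (vscal a x)) ->
  seq_closed U ->
  forall h, exists p, U p /\ forall u, U u -> inner (vsub h p) u = C0.
Proof.
  intros U0 Uadd Uscal Ucl h.
  set (E := fun r => exists u, U u /\ r = - nsq (vsub h u)).
  assert (Eb : bound E).
  { exists 0. intros r [u [_ ->]]. pose proof (nsq_ge0 (vsub h u)). lra. }
  assert (Ene : exists r, E r) by (exists (- nsq (vsub h vzero)); exists vzero; auto).
  destruct (completeness E Eb Ene) as [m [Hm1 Hm2]].
  set (d := - m).
  assert (Hd1 : forall u, U u -> d <= nsq (vsub h u)).
  { intros u Hu. assert (E (- nsq (vsub h u))) by (exists u; auto).
    apply Hm1 in H0. unfold d. lra. }
  assert (Hd0 : 0 <= d).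
  { assert (m <= 0). { apply Hm2. intros r [u [_ ->]]. pose proof (nsq_ge0 (vsub h u)). lra. }
    unfold d; lra. }
  assert (Hd2 : forall e, 0 < e -> exists u, U u /\ nsq (vsub h u) < d + e).
  { intros e He. apply NNPP. intro Hn.
    assert (is_upper_bound E (m - e)).
    { intros r [u [Hu ->]]. apply Rnot_lt_le. intro Hc. apply Hn. exists u. split; auto.
      unfold d. lra. }
    apply Hm2 in H0. lra. }
  assert (Hs : forall n : nat, exists u, U u /\ nsq (vsub h u) < d + / (INR n + 1)).
  { intro n. apply Hd2. apply Rinv_0_lt_compat. pose proof (pos_INR n). lra. }
  apply functional_choice in Hs. destruct Hs as [s Hs].
  assert (Hc : forall n k, nsq (vsub (s n) (s k)) <= 2 * / (INR n + 1) + 2 * / (INR k + 1)).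
  { intros n k. rewrite parallel with (h := h).
    destruct (Hs n) as [Un Hn]. destruct (Hs k) as [Uk Hk].
    pose proof (Hd1 _ (Uscal (rs (1/2)) _ (Uadd _ _ Un Uk))). lra. }
  destruct (complete H s) as [p Hp].
  { intros eps Heps. destruct (arch (eps * eps / 4)) as [N HN].
    { apply Rdiv_lt_0_compat; nra. }
    exists N. intros n k Hn Hk. apply hn_lt; auto.
    pose proof (HN _ Hn). pose proof (HN _ Hk). pose proof (Hc n k) as Hnk. unfold vsub in Hnk. lra. }
  assert (Hp' : forall e, 0 < e -> exists N, forall n, (N <= n)%nat -> nsq (vsub (s n) p) < e).
  { intros e He. destruct (Hp (sqrt e)) as [N HN]. apply sqrt_lt_R0; auto.
    exists N. intros n Hn. apply hn_lt_inv. apply HN; auto. }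
  assert (Up : U p) by (apply (Ucl s p); auto; intro n; apply Hs).
  exists p. split; auto.
  assert (Hmin : nsq (vsub h p) <= d).
  { apply Rnot_lt_le. intro Hlt. set (del := nsq (vsub h p) - d).
    assert (Hdel : 0 < del) by (unfold del; lra).
    set (t := del / (3 * (d + 1))).
    assert (Ht : 0 < t) by (unfold t; apply Rdiv_lt_0_compat; lra).
    assert (Htd : t * d <= del / 3).
    { unfold t. apply Rmult_le_reg_r with (3 * (d+1)); [lra|]. field_simplify; nra. }
    destruct (arch (del / (3 * (1 + t)))) as [N1 HN1]. apply Rdiv_lt_0_compat; lra.
    destruct (Hp' (del / (3 * (1 + / t)))) as [N2 HN2].
    { apply Rdiv_lt_0_compat; auto. pose proof (Rinv_0_lt_compat t Ht); lra. }
    set (n := Nat.max N1 N2).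
    specialize (HN1 n (Nat.le_max_l N1 N2)). specialize (HN2 n (Nat.le_max_r N1 N2)).
    destruct (Hs n) as [_ Hn].
    assert (E1 : vsub h p = vadd (vsub h (s n)) (vsub (s n) p)) by veq.
    pose proof (ineq2 (vsub h (s n)) (vsub (s n) p) t Ht) as I.
    assert (Ed : del + d = nsq (vadd (vsub h (s n)) (vsub (s n) p))) by (unfold del; rewrite <- E1; ring).
    rewrite nsq_add in Ed. clear Hlt.
    set (A := nsq (vsub h (s n))) in *. set (B := nsq (vsub (s n) p)) in *.
    set (q := / (INR n + 1)) in *.
    assert (Hq : 0 < q) by (unfold q; apply Rinv_0_lt_compat; pose proof (pos_INR n); lra).
    assert (HB : 0 <= B) by apply nsq_ge0.
    assert (I1 : (1 + t) * q < del / 3).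
    { apply Rmult_lt_compat_l with (r := 1 + t) in HN1; [|lra].
      replace ((1 + t) * (del / (3 * (1 + t)))) with (del/3) in HN1 by (field; lra). lra. }
    assert (I2 : (1 + / t) * B < del / 3).
    { pose proof (Rinv_0_lt_compat t Ht).
      apply Rmult_lt_compat_l with (r := 1 + / t) in HN2; [|lra].
      replace ((1 + / t) * (del / (3 * (1 + / t)))) with (del/3) in HN2 by (field; lra). lra. }
    assert (I3 : B / t = / t * B) by (unfold Rdiv; ring).
    assert (t * A <= t * d + t * q) by nra.
    lra. }
  set (z := vsub h p) in *.
  assert (Hre : forall u, U u -> Re (inner z u) = 0).
  { intros u Hu.
    assert (K : forall sc, 0 <= - 2 * sc * Re (inner z u) + sc * sc * nsq u).
    { intro sc. pose proof (Hd1 _ (Uadd _ _ Up (Uscal (rs sc) _ Hu))) as D.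
      replace (vsub h (vadd p (vscal (rs sc) u))) with (vsub z (vscal (rs sc) u)) in D by (unfold z; veq).
      rewrite nsq_sub_split in D. lra. }
    set (R0 := Re (inner z u)) in *. set (W := nsq u) in *.
    assert (HW : 0 <= W) by apply nsq_ge0.
    specialize (K (R0 / (W + 1))).
    assert (K2 : 0 <= R0 * R0 * (- 2 * (W + 1) + W)).
    { apply Rmult_le_compat_r with (r := (W+1) * (W+1)) in K; [|nra].
      replace (0 * ((W + 1) * (W + 1))) with 0 in K by ring.
      replace ((- 2 * (R0 / (W + 1)) * R0 + R0 / (W + 1) * (R0 / (W + 1)) * W) * ((W + 1) * (W + 1)))
        with (R0 * R0 * (- 2 * (W + 1) + W)) in K by (field; lra). exact K. }
    nra. }
  intros u Hu. apply Cx_ext.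
  - apply Hre; auto.
  - rewrite im_as_re. apply Hre. apply Uscal. auto.
Qed.


Lemma zero_abs r : (forall d, 0 < d -> Rabs r < d) -> r = 0.
Proof. intro H. destruct (Req_dec r 0); auto. specialize (H (Rabs r)). pose proof (Rabs_pos_lt r H0). lra. Qed.

Lemma small_both {H : HilbertSpace} (w : H) d : 0 < d -> exists eta, 0 < eta /\
  forall x, nsq x < eta -> Rabs (Re (inner x w)) < d /\ Rabs (Im (inner x w)) < d.
Proof.
  intro Hd. destruct (small_re w d Hd) as [e1 [He1 H1]].
  destruct (small_re (vscal (Cmk 0 1) w) d Hd) as [e2 [He2 H2]].
  exists (Rmin e1 e2). split. apply Rmin_pos; auto.
  intros x Hx. pose proof (Rmin_l e1 e2). pose proof (Rmin_r e1 e2).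
  destruct (H1 x ltac:(lra)). destruct (H2 x ltac:(lra)).
  rewrite im_as_re. split; apply Rabs_def1; lra.
Qed.

Lemma riesz {H : HilbertSpace} (Rf : H -> H) (c : R) :
  (forall x y, Rf (vadd x y) = vadd (Rf x) (Rf y)) ->
  (forall a x, Rf (vscal a x) = vscal a (Rf x)) ->
  (forall u, nsq (Rf u) <= c * nsq u) ->
  forall v : H, exists g, forall u, inner (Rf u) v = inner u g.
Proof.
  intros Radd Rscal Rb v.
  assert (R0 : Rf vzero = vzero).
  { rewrite <- (vscal0 vzero), Rscal, !vscal0. auto. }
  set (phi := fun u => inner (Rf u) v).
  assert (phiadd : forall x y, phi (vadd x y) = Cadd (phi x) (phi y)).
  { intros. unfold phi. rewrite Radd, inner_add_l. auto. }
  assert (phiscal : forall a x, phi (vscal a x) = Cmul a (phi x)).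
  { intros. unfold phi. rewrite Rscal, inner_scal_l. auto. }
  assert (phi0 : phi vzero = C0) by (unfold phi; rewrite R0, inner_0_l; auto).
  destruct (classic (exists u0, phi u0 <> C0)) as [[u0 Hu0] | Hno].
  2: { exists vzero. intro u. rewrite inner_0_r. apply NNPP. intro. apply Hno. exists u. auto. }
  set (K := fun u => phi u = C0).
  assert (Kcl : seq_closed K).
  { intros s l Hs Hl. unfold K. 
    assert (E : forall n, phi l = phi (vsub l (s n))).
    { intro n. replace l with (vadd (vsub l (s n)) (s n)) at 1 by veq.
      rewrite phiadd, (Hs n). cx; ring. }
    set (C := Rabs c + 1). assert (HC : c < C) by (unfold C; pose proof (Rle_abs c); lra).
    assert (HC0 : 0 < C) by (unfold C; pose proof (Rabs_pos c); lra).
    assert (Hsmall : forall d, 0 < d -> Rabs (Re (phi l)) < d /\ Rabs (Im (phi l)) < d).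
    { intros d Hd. destruct (small_both v d Hd) as [eta [Heta Hx]].
      destruct (Hl (eta / C)) as [N HN]. apply Rdiv_lt_0_compat; lra.
      specialize (HN N (le_n N)). rewrite (E N). apply Hx.
      apply Rle_lt_trans with (c * nsq (vsub l (s N))). apply Rb.
      rewrite nsq_neg. 
      apply Rle_lt_trans with (C * nsq (vsub (s N) l)). pose proof (nsq_ge0 (vsub (s N) l)). nra.
      apply Rmult_lt_compat_l with (r := C) in HN; [|lra].
      replace (C * (eta / C)) with eta in HN by (field; lra). lra. }
    apply Cx_ext; apply zero_abs; intros; apply Hsmall; auto. }
  assert (Kadd : forall x y, K x -> K y -> K (vadd x y)).
  { unfold K; intros x y Hx Hy. rewrite phiadd, Hx, Hy. cx; ring. }
  assert (Kscal : forall a x, K x -> K (vscal a x)).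
  { unfold K; intros a x Hx. rewrite phiscal, Hx. cx; ring. }
  destruct (proj K phi0 Kadd Kscal Kcl u0) as [p [Kp Hp]].
  set (z := vsub u0 p) in *.
  assert (Ez : phi z = phi u0).
  { unfold z. replace u0 with (vadd (vsub u0 p) p) at 2 by veq. rewrite phiadd, Kp. cx; ring. }
  assert (Hn : nsq z <> 0).
  { intro Hz. apply nsq0 in Hz. apply Hu0. rewrite <- Ez, Hz. auto. }
  set (pz := phi z) in *. set (n := nsq z) in *.
  exists (vscal (Cmk (Re pz / n) (- Im pz / n)) z).
  intro u. fold (phi u).
  assert (Ku : K (vadd (vscal pz u) (vscal m1 (vscal (phi u) z)))).
  { unfold K. rewrite phiadd, !phiscal. fold pz. cx; ring. }
  specialize (Hp _ Ku). fold z in Hp.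
  rewrite inner_add_r, !inner_scal_r in Hp.
  pose proof (f_equal Re Hp) as H1. pose proof (f_equal Im Hp) as H2.
  rewrite inner_scal_r.
  pose proof (inner_self_im z) as Hi.
  simpl in H1, H2. rewrite (inner_conj_re u z), (inner_conj_im u z), Hi in H1, H2.
  destruct (phi u) as [X Y]. destruct pz as [P Q]. destruct (inner u z) as [a b].
  unfold n, nsq in *. simpl in *.
  set (N := Re (inner z z)) in *.
  cx; apply Rmult_eq_reg_r with N; auto; field_simplify; auto; lra.
Qed.


Theorem mainTheorem7 (Hf Hc : HilbertSpace) (A : rel Hf Hf) (D : rel Hf Hf)
  (G0 G1 : Hf -> Hf -> Hc) (AT : rel Hf Hf) (lam : Cx) :
  linear_rel A -> closed_rel A -> symmetric_rel A ->
  AB_generalized_boundary_triple A D G0 G1 ->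
  linear_rel AT ->
  (forall f f', A f f' -> AT f f') ->
  (forall f f', AT f f' -> D f f') ->
  resolvent_set (A0_of D G0) lam ->
  rel_eq (rinv (rshift AT lam))
    (rsum (rinv (rshift (A0_of D G0) lam))
          (rprod (gamma_field D G0 lam)
                 (rprod (rinv (rsub (Gamma_image G0 G1 AT) (weyl D G0 G1 lam)))
                        (adj (gamma_field D G0 (Cconj lam)))))).
Proof.
  intros HAlin HAcl HAsym HBT HATlin HAAT HATD Hres.
  destruct HBT as [Dlin [DA [Ddense [Glin [Gscal [Green [G0dense A0sa]]]]]]].
  destruct Dlin as [D00 [Dadd Dscal]].
  destruct Hres as [Rex [Runi [c Rbd]]].
  destruct HAlin as [A00 [Aadd Ascal]].
  destruct HATlin as [AT00 [ATadd ATscal]].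
  set (A0 := A0_of D G0) in *.
  assert (Dsub : forall x x' y y', D x x' -> D y y' -> D (vsub x y) (vsub x' y')).
  { intros. unfold vsub. rewrite !vopp_scal. auto. }
  assert (Asub : forall x x' y y', A x x' -> A y y' -> A (vsub x y) (vsub x' y')).
  { intros. unfold vsub. rewrite !vopp_scal. auto. }
  assert (ATsub : forall x x' y y', AT x x' -> AT y y' -> AT (vsub x y) (vsub x' y')).
  { intros. unfold vsub. rewrite !vopp_scal. auto. }
  assert (G0sub : forall x x' y y', D x x' -> D y y' -> G0 (vsub x y) (vsub x' y') = vsub (G0 x x') (G0 y y')).
  { intros. unfold vsub. rewrite !vopp_scal. rewrite (proj1 (Glin _ _ _ _ H (Dscal m1 _ _ H0))).
    rewrite (proj1 (Gscal _ _ _ H0)). auto. }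
  assert (G1sub : forall x x' y y', D x x' -> D y y' -> G1 (vsub x y) (vsub x' y') = vsub (G1 x x') (G1 y y')).
  { intros. unfold vsub. rewrite !vopp_scal. rewrite (proj2 (Glin _ _ _ _ H (Dscal m1 _ _ H0))).
    rewrite (proj2 (Gscal _ _ _ H0)). auto. }
  assert (G00 : G0 vzero vzero = vzero).
  { pose proof (proj1 (Gscal C0 _ _ D00)). rewrite !vscal0 in H. auto. }
  assert (A000 : A0 vzero vzero) by (split; auto).
  assert (A0sub : forall x x' y y', A0 x x' -> A0 y y' -> A0 (vsub x y) (vsub x' y')).
  { intros x x' y y' [Hx Gx] [Hy Gy]. split; auto. rewrite G0sub, Gx, Gy by auto. veq. }
  assert (A0add : forall x x' y y', A0 x x' -> A0 y y' -> A0 (vadd x y) (vadd x' y')).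
  { intros x x' y y' [Hx Gx] [Hy Gy]. split; auto. rewrite (proj1 (Glin _ _ _ _ Hx Hy)), Gx, Gy. veq. }
  assert (A0scal : forall a x x', A0 x x' -> A0 (vscal a x) (vscal a x')).
  { intros a x x' [Hx Gx]. split; auto. rewrite (proj1 (Gscal _ _ _ Hx)), Gx. veq. }
  destruct (functional_choice _ Rex) as [Rf HRf].
  assert (Runi' : forall h f1 f2, rshift A0 lam f1 h -> rshift A0 lam f2 h -> f1 = f2) by exact Runi.
  clear Runi.
  assert (RfE : forall h f, rshift A0 lam f h -> Rf h = f).
  { intros. apply (Runi' h); auto. apply HRf. }
  assert (ker : forall x x', A0 x x' -> x' = vscal lam x -> x = vzero).
  { intros x x' Hx E. apply (Runi' vzero).
    - exists x'. split; auto. subst. veq.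
    - exists vzero. split; auto. veq. }
  assert (Rfadd : forall x y, Rf (vadd x y) = vadd (Rf x) (Rf y)).
  { intros x y. apply RfE. destruct (HRf x) as [gx [Hx Ex]]. destruct (HRf y) as [gy [Hy Ey]].
    apply vsub_back in Ex. apply vsub_back in Ey. subst gx gy.
    exists (vadd (vadd x (vscal lam (Rf x))) (vadd y (vscal lam (Rf y)))). split; auto. veq. }
  assert (Rfscal : forall a x, Rf (vscal a x) = vscal a (Rf x)).
  { intros a x. apply RfE. destruct (HRf x) as [gx [Hx Ex]].
    apply vsub_back in Ex. subst gx.
    exists (vscal a (vadd x (vscal lam (Rf x)))). split; auto. veq. }
  assert (Rfsub : forall x y, Rf (vsub x y) = vsub (Rf x) (Rf y)).
  { intros. unfold vsub. rewrite !vopp_scal, Rfadd, Rfscal. auto. }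
  assert (Rfb : forall u, nsq (Rf u) <= (c * c) * nsq u).
  { intro u. pose proof (Rbd u (Rf u) (HRf u)). rewrite <- !hn_sq.
    pose proof (sqrt_pos (Re (inner (Rf u) (Rf u)))). unfold hnorm in *. nra. }
  assert (A0sym : forall x x' y y', A0 x x' -> A0 y y' -> inner x' y = inner x y').
  { intros x x' y y' Hx Hy. apply A0sa in Hy. apply Hy. auto. }
  assert (Rt : forall v, exists y y', A0 y y' /\ v = vsub y' (vscal (Cconj lam) y)).
  { intro v. destruct (riesz Rf (c * c) Rfadd Rfscal Rfb v) as [g Hg].
    exists g, (vadd v (vscal (Cconj lam) g)). split; [|veq].
    apply A0sa. intros x x' Hx.
    pose proof (Hg (vsub x' (vscal lam x))) as E.
    rewrite (RfE _ x) in E by (exists x'; auto).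
    expand_in E. expand. destruct lam as [lr li]. 
    pose proof (f_equal Re E) as E1. pose proof (f_equal Im E) as E2. simpl in E1, E2 |- *.
    cx; nra. }
  assert (AA0 : forall a a', A a a' -> A0 a a').
  { intros a a' Ha. apply A0sa. intros x x' [Hx _].
    pose proof (DA _ _ Hx _ _ Ha) as E.
    rewrite (inner_conj _ a x'), (inner_conj _ a' x), E. auto. }
  assert (G0d : forall w, (forall x x', D x x' -> inner (G0 x x') w = C0) -> w = vzero).
  { intros w Hw. apply nsq0. apply zero_of_small. apply nsq_ge0.
    intros d Hd. destruct (G0dense w (sqrt d) (sqrt_lt_R0 _ Hd)) as [x [x' [Hx Hn]]].
    apply hn_lt_inv in Hn. eapply Rle_lt_trans; [|exact Hn]. apply pyth.
    rewrite Hw; auto. }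
  set (U := fun u => exists a a', A a a' /\ u = vsub a' (vscal lam a)).
  assert (Ucl : seq_closed U).
  { intros s l Hs Hl.
    assert (Hsn : forall n, A (Rf (s n)) (vadd (s n) (vscal lam (Rf (s n))))).
    { intro n. destruct (Hs n) as [a [a' [Ha Ea]]].
      assert (Rf (s n) = a) by (apply RfE; exists a'; split; auto).
      rewrite H. apply vsub_back in Ea. rewrite <- Ea. auto. }
    exists (Rf l), (vadd l (vscal lam (Rf l))). split; [|veq].
    apply (HAcl (fun n => Rf (s n)) (fun n => vadd (s n) (vscal lam (Rf (s n))))); auto.
    intros eps Heps.
    set (L := Re lam * Re lam + Im lam * Im lam).
    assert (HL : 0 <= L) by (unfold L; nra).
    set (K := 2 + 2 * L * (c * c) + c * c + 1).
    assert (HK : 0 < K) by (unfold K; nra).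
    destruct (Hl (eps * eps / K)) as [N HN]. apply Rdiv_lt_0_compat; nra.
    exists N. intros n Hn. specialize (HN n Hn).
    assert (HN' : K * nsq (vsub (s n) l) < eps * eps).
    { apply Rmult_lt_compat_l with (r := K) in HN; auto.
      replace (K * (eps * eps / K)) with (eps * eps) in HN by (field; lra). auto. }
    pose proof (nsq_ge0 (vsub (s n) l)) as P0.
    assert (B1 : nsq (vsub (Rf (s n)) (Rf l)) <= c * c * nsq (vsub (s n) l)).
    { rewrite <- Rfsub. apply Rfb. }
    pose proof (nsq_ge0 (vsub (Rf (s n)) (Rf l))) as P1.
    split; apply hn_lt; auto.
    - assert (0 <= c * c) by nra. unfold K in HN'. nra.
    - replace (vsub (vadd (s n) (vscal lam (Rf (s n)))) (vadd l (vscal lam (Rf l))))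
        with (vadd (vsub (s n) l) (vscal lam (vsub (Rf (s n)) (Rf l)))) by veq.
      eapply Rle_lt_trans. apply nsq_add_le. rewrite nsq_scal. fold L.
      assert (L * nsq (vsub (Rf (s n)) (Rf l)) <= L * (c * c * nsq (vsub (s n) l))) by nra.
      assert (0 <= c * c) by nra. unfold K in HN'. nra. }
  assert (U0 : U vzero) by (exists vzero, vzero; split; auto; veq).
  assert (Uadd : forall x y, U x -> U y -> U (vadd x y)).
  { intros x y [a [a' [Ha ->]]] [b [b' [Hb ->]]]. exists (vadd a b), (vadd a' b'). split; auto. veq. }
  assert (Uscal : forall k x, U x -> U (vscal k x)).
  { intros k x [a [a' [Ha ->]]]. exists (vscal k a), (vscal k a'). split; auto. veq. }
  assert (Key : forall e e', A0 e e' ->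
      (forall x, D x (vscal (Cconj lam) x) -> inner (G0 x (vscal (Cconj lam) x)) (G1 e e') = C0) ->
      A e e').
  { intros e e' He Horth.
    assert (G1e : G1 e e' = vzero).
    { apply G0d. intros x x' Hx.
      destruct (Rt (vsub x' (vscal (Cconj lam) x))) as [y [y' [Hy Ey]]].
      apply vsub_back in Ey. subst y'.
      assert (Dxy : D (vsub x y) (vscal (Cconj lam) (vsub x y))).
      { replace (vscal (Cconj lam) (vsub x y)) with
          (vsub x' (vadd (vsub x' (vscal (Cconj lam) x)) (vscal (Cconj lam) y))) by veq.
        apply Dsub; auto. apply Hy. }
      specialize (Horth _ Dxy).
      replace (vscal (Cconj lam) (vsub x y)) with
          (vsub x' (vadd (vsub x' (vscal (Cconj lam) x)) (vscal (Cconj lam) y))) in Horth by veq.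
      rewrite G0sub in Horth by (auto; apply Hy). destruct Hy as [_ Gy]. rewrite Gy in Horth.
      replace (vsub (G0 x x') vzero) with (G0 x x') in Horth by veq. auto. }
    assert (Esym : forall x x', D x x' -> inner x' e = inner x e').
    { intros x x' Hx. pose proof (Green _ _ _ _ Hx (proj1 He)) as G.
      rewrite (proj2 He), G1e, !inner_0_r in G.
      pose proof (f_equal Re G) as G1'. pose proof (f_equal Im G) as G2'. simpl in G1', G2'.
      cx; lra. }
    destruct (proj U U0 Uadd Uscal Ucl (vsub e' (vscal lam e))) as [p [[a [a' [Ha ->]]] Hp]].
    set (z := vsub (vsub e' (vscal lam e)) (vsub a' (vscal lam a))) in *.
    set (e2 := vsub e a). set (e2' := vsub e' a').
    assert (He2 : A0 e2 e2') by (apply A0sub; auto).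
    assert (Esym2 : forall x x', D x x' -> inner x' e2 = inner x e2').
    { intros x x' Hx. pose proof (Esym _ _ Hx) as E1. pose proof (DA _ _ Hx _ _ Ha) as E2.
      assert (E3 : inner x' a = inner x a').
      { rewrite (inner_conj _ a x'), (inner_conj _ a' x), E2. auto. }
      unfold e2, e2'. expand. rewrite E1, E3. auto. }
    assert (Zadj : adj A z (vscal (Cconj lam) z)).
    { intros b b' Hb. assert (Ub : U (vsub b' (vscal lam b))) by (exists b, b'; auto).
      specialize (Hp _ Ub). fold z in Hp.
      rewrite inner_conj in Hp. expand_in Hp. expand.
      destruct lam as [lr li].
      pose proof (f_equal Re Hp) as H1. pose proof (f_equal Im Hp) as H2. simpl in H1, H2 |- *.
      cx; nra. }
    assert (Ez : z = vsub e2' (vscal lam e2)) by (unfold z, e2, e2'; veq).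
    assert (z0 : z = vzero).
    { apply nsq0. apply zero_of_small. apply nsq_ge0. intros d Hd.
      destruct (small_re e2' (d/2)) as [eta1 [He1 Hs1]]. lra.
      destruct (small_re e2 (d/2)) as [eta2 [He2' Hs2]]. lra.
      destruct (Ddense _ _ Zadj (sqrt (Rmin eta1 eta2))) as [x [x' [Hx [Hn1 Hn2]]]].
      { apply sqrt_lt_R0. apply Rmin_pos; auto. }
      apply hn_lt_inv in Hn1. apply hn_lt_inv in Hn2.
      pose proof (Rmin_l eta1 eta2). pose proof (Rmin_r eta1 eta2).
      destruct (Hs1 (vsub z x)) as [S1 _]. lra.
      destruct (Hs2 (vsub (vscal (Cconj lam) z) x')) as [_ S2]. lra.
      pose proof (Esym2 _ _ Hx) as Ex.
      assert (Iz : inner z z = inner z (vsub e2' (vscal lam e2))) by (rewrite <- Ez; auto).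
      unfold nsq. rewrite Iz.
      expand_in S1. expand_in S2. expand. destruct lam as [lr li].
      pose proof (f_equal Re Ex) as X1. simpl in S1, S2, X1 |- *. nra. }
    assert (e2z : e2 = vzero).
    { apply (ker e2 e2'); auto. apply vsub_eq0. rewrite <- Ez. auto. }
    assert (e2z' : e2' = vzero).
    { replace e2' with (vadd (vsub e2' (vscal lam e2)) (vscal lam e2)) by veq.
      rewrite <- Ez, z0, e2z. veq. }
    unfold e2 in e2z. unfold e2' in e2z'.
    apply vsub_eq0 in e2z. apply vsub_eq0 in e2z'. subst. auto. }
  assert (GA : forall g g', A0 g g' -> forall y, D y (vscal (Cconj lam) y) ->
     inner y (vsub g' (vscal lam g)) = inner (G0 y (vscal (Cconj lam) y)) (G1 g g')).
  { intros g g' [Hg Gg] y Hy. pose proof (Green _ _ _ _ Hy Hg) as G.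
    rewrite Gg, inner_0_r in G. expand_in G. expand. destruct lam as [lr li].
    pose proof (f_equal Re G) as G1'. pose proof (f_equal Im G) as G2'. simpl in G1', G2' |- *.
    cx; nra. }
  intros h f. split.
  - intros [f' [Hf' Eh]]. apply vsub_back in Eh. subst f'.
    destruct (HRf h) as [g' [Hg Eg]]. apply vsub_back in Eg. subst g'.
    set (g := Rf h) in *.
    exists g, (vsub f g). split; [|split]; [| |veq].
    + exists (vadd h (vscal lam g)). split; auto. veq.
    + assert (D3 : D (vsub f g) (vscal lam (vsub f g))).
      { replace (vscal lam (vsub f g)) with (vsub (vadd h (vscal lam f)) (vadd h (vscal lam g))) by veq.
        apply Dsub; auto. apply Hg. }
      assert (E3 : vscal lam (vsub f g) = vsub (vadd h (vscal lam f)) (vadd h (vscal lam g))) by veq.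
      exists (G0 (vsub f g) (vscal lam (vsub f g))). split.
      * exists (G1 g (vadd h (vscal lam g))). split.
        -- intros hc x [y [Hy [-> ->]]].
           rewrite <- (GA _ _ Hg y Hy). f_equal. veq.
        -- exists (G1 f (vadd h (vscal lam f))), (G1 (vsub f g) (vscal lam (vsub f g))).
           split; [|split].
           ++ exists f, (vadd h (vscal lam f)). split; auto. split; auto.
              rewrite E3, G0sub by (auto; apply Hg). destruct Hg as [_ ->]. veq.
           ++ exists (vsub f g). auto.
           ++ rewrite E3, G1sub by (auto; apply Hg). veq.
      * exists (vsub f g). auto.
  - intros [g [k [[g' [Hg Eg]] [[c' [[cc [Hadj [y [z [[f1 [f1' [Hf1 [Ec1 ->]]]] [[f2 [Hf2 [Ec2 ->]]] ->]]]]]] [f3 [Hf3 [Ec3 ->]]]]] ->]]]].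
    apply vsub_back in Eg. subst g'.
    assert (f23 : f2 = f3).
    { apply vsub_eq0. apply (ker _ (vsub (vscal lam f2) (vscal lam f3))); [|veq].
      split; auto. rewrite G0sub by auto. rewrite <- Ec2, <- Ec3. veq. }
    subst f2.
    set (e := vsub (vsub f1 f3) g). set (e' := vsub (vsub f1' (vscal lam f3)) (vadd h (vscal lam g))).
    assert (He : A0 e e').
    { split.
      - apply Dsub; auto. apply Hg.
      - unfold e, e'. rewrite !G0sub; auto. rewrite <- Ec1, <- Ec3. destruct Hg as [_ ->]. veq.
        apply Hg. }
    assert (HeA : A e e').
    { apply Key; auto. intros x Hx.
      pose proof (Hadj _ _ (ex_intro _ x (conj Hx (conj eq_refl eq_refl)))) as E1.
      pose proof (GA _ _ Hg x Hx) as E2.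
      replace (vsub (vadd h (vscal lam g)) (vscal lam g)) with h in E2 by veq.
      unfold e, e'. rewrite !G1sub; auto. 2: apply Hg.
      rewrite E2 in E1. expand_in E1. expand.
      pose proof (f_equal Re E1) as R1. pose proof (f_equal Im E1) as R2. simpl in R1, R2 |- *.
      cx; lra. }
    exists (vsub f1' e'). split.
    + replace (vadd g f3) with (vsub f1 e) by (unfold e; veq). apply ATsub; auto.
    + unfold e'. veq.
Qed.
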